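(* Let $\mathcal A\in\mathbb C^{n\times n}$ be nonsingular and suppose $\mathcal A=\mathcal P_1+\mathcal P_2$, where $\mathcal P_1,\mathcal P_2\in\mathbb C^{n\times n}$ are positive semidefinite (in the sense of the context). Let $\Sigma\in\mathbb C^{n\times n}$ be Hermitian positive definite, and let $\Gamma_{\mathrm{PPS}}$, $\tilde{\mathcal P}_1,\tilde{\mathcal P}_2,\tilde{\mathcal P}_+,\tilde{\mathcal P}_-$, $f$ and $\mathrm{ev}(\cdot)$ be as in the context. For $i=1,2$ and $x\in\mathbb C^n\setminus\{0\}$ define $$m_i(x):=f(\tilde{\mathcal P}_{3-i})\sqrt{\frac{x^*(\mathcal I+\tilde{\mathcal P}_i^*\tilde{\mathcal P}_i)x-x^*(\tilde{\mathcal P}_i+\tilde{\mathcal P}_i^* )x}{x^*(\mathcal I+\tilde{\mathcal P}_i^*\tilde{\mathcal P}_i)x+x^*(\tilde{\mathcal P}_i+\tilde{\mathcal P}_i^* )x}}.$$ Then $m_i(x)\le 1$ for $i=1,2$, and for every $\lambda\in\sigma(\Gamma_{\mathrm{PPS}})$ there exists a vector $x_\lambda\in\mathrm{ev}(\tilde{\mathcal P}_+^{-1}\tilde{\mathcal P}_-)$ such that $$|\lambda|\le\min\{m_1(x_\lambda),m_2(y_\lambda)\},\qquad y_\lambda:=(\mathcal I+\tilde{\mathcal P}_2)^{-1}(\mathcal I-\tilde{\mathcal P}_1)x_\lambda .$$ Consequently $$\rho(\Gamma_{\mathrm{PPS}})\le\max_{x_\lambda\in\mathrm{ev}(\tilde{\mathcal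 P}_+^{-1}\tilde{\mathcal P}_-)}\min\left\{m_1(x_\lambda),\,m_2\big((\mathcal I+\tilde{\mathcal P}_2)^{-1}(\mathcal I-\tilde{\mathcal P}_1)x_\lambda\big)\right\}\le 1.$$
   Context: A matrix $\mathcal P\in\mathbb C^{n\times n}$ is called positive semidefinite if $\mathcal P+\mathcal P^*$ is Hermitian positive semidefinite (HPSD), and positive definite (PD) if $\mathcal P+\mathcal P^*$ is Hermitian positive definite (HPD); $\mathcal P$ need not be Hermitian. $\mathcal I$ is the identity matrix, $\|\cdot\|$ the Euclidean (spectral) norm, $\sigma(\cdot)$ the spectrum, $\rho(\cdot)$ the spectral radius, and $\mathrm{ev}(M)$ denotes the set of all nonzero eigenvectors of a square matrix $M$. For HPD $\Sigma$, $\Sigma^{1/2}$ is its HPD square root. Given the splitting $\mathcal A=\mathcal P_1+\mathcal P_2$ and HPD $\Sigma$, the PPS iteration matrix is $\Gamma_{\mathrm{PPS}}=(\Sigma+\mathcal P_1)^{-1}(\Sigma-\mathcal P_2)(\Sigma+\mathcal P_2)^{-1}(\Sigma-\mathcal P_1)$. Set $\tilde{\mathcal P}_i=\Sigma^{-1/2}\mathcal P_i\Sigma^{-1/2}$ ($i=1,2$), $\tilde{\mathcal P}_+=(\mathcal I+\tilde{\mathcal P}_2)(\mathcal I+\tilde{\mathcal P}_1)$ and $\tilde{\mathcal P}_-=(\mathcal I-\tilde{\mathcal P}_2)(\mathcal I-\tilde{\mathcal P}_1)$. For a square matrix $\mathcal P$ with $\mathcal I+\mathcal P$ invertible, $f(\mathcal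 P):=\|(\mathcal I+\mathcal P)^{-1}(\mathcal I-\mathcal P)\|$. *)

(* Defs.v *)
(* complex numbers are R[i] (mathcomp-real-closed) over an
   abstract R : realType (MathComp-Analysis), so that the spectral norm and the
   spectral radius can be defined as suprema. *)
From HB Require Import structures.
From mathcomp Require Import all_boot all_order all_algebra.
From mathcomp Require Import complex.
From mathcomp Require Import boolp classical_sets reals.
Set Implicit Arguments.
Unset Strict Implicit.
Unset Printing Implicit Defensive.
Import Order.TTheory GRing.Theory Num.Theory.
Local Open Scope ring_scope.
Local Open Scope classical_set_scope.

Section Defs.
Variable R : realType.
Local Notation C := R[i].

Definition ctr (m n : nat) (A : 'M[C]_(m, n)) : 'M[C]_(n, m) :=
  (map_mx Num.conj A)^T.

Definition qform (n : nat) (A : 'M[C]_n) (x : 'cV[C]_n) : C :=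
  (ctr x *m A *m x) 0 0.

Definition hermitian (n : nat) (A : 'M[C]_n) : Prop := ctr A = A.

Definition hpsd (n : nat) (A : 'M[C]_n) : Prop :=
  hermitian A /\ forall x : 'cV[C]_n, 0 <= qform A x.
Definition hpd (n : nat) (A : 'M[C]_n) : Prop :=
  hermitian A /\ forall x : 'cV[C]_n, x != 0 -> 0 < qform A x.

(* (not necessarily Hermitian) positive semidefinite / definite, as in the paper:
   P + P^* is HPSD / HPD *)
Definition psd (n : nat) (P : 'M[C]_n) : Prop := hpsd (P + ctr P).
Definition pd (n : nat) (P : 'M[C]_n) : Prop := hpd (P + ctr P).

Definition cabs (z : C) : R := complex.Re `|z|.

Definition vnorm (n : nat) (x : 'cV[C]_n) : R :=
  Num.sqrt (\sum_(i < n) cabs (x i 0) ^+ 2).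

Definition opnorm (n : nat) (A : 'M[C]_n) : R :=
  sup [set r : R | exists2 x : 'cV[C]_n, x != 0 & r = vnorm (A *m x) / vnorm x].

Definition spectrum (n : nat) (A : 'M[C]_n) : set C := [set l | eigenvalue A l].
Definition specrad (n : nat) (A : 'M[C]_n) : R := sup [set cabs l | l in spectrum A].

Definition ev (n : nat) (M : 'M[C]_n) : set 'cV[C]_n :=
  [set x | x != 0 /\ exists mu : C, M *m x = mu *: x].

Definition fP (n : nat) (P : 'M[C]_n) : R :=
  opnorm (invmx (1%:M + P) *m (1%:M - P)).

Definition Gamma_PPS (n : nat) (Sig P1 P2 : 'M[C]_n) : 'M[C]_n :=
  invmx (Sig + P1) *m (Sig - P2) *m invmx (Sig + P2) *m (Sig - P1).

(* tilde P = Sig^{-1/2} P Sig^{-1/2}, where S = Sig^{1/2} *)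
Definition tildeP (n : nat) (S P : 'M[C]_n) : 'M[C]_n :=
  invmx S *m P *m invmx S.

Definition Pplus (n : nat) (Pt1 Pt2 : 'M[C]_n) : 'M[C]_n :=
  (1%:M + Pt2) *m (1%:M + Pt1).
Definition Pminus (n : nat) (Pt1 Pt2 : 'M[C]_n) : 'M[C]_n :=
  (1%:M - Pt2) *m (1%:M - Pt1).

(* m_i(x), with Pi = tilde P_i and Pj = tilde P_{3-i} *)
Definition mfun (n : nat) (Pi Pj : 'M[C]_n) (x : 'cV[C]_n) : R :=
  let a := complex.Re (qform (1%:M + ctr Pi *m Pi) x) in
  let b := complex.Re (qform (Pi + ctr Pi) x) in
  fP Pj * Num.sqrt ((a - b) / (a + b)).

End Defs.

(* Main.v *)
Require Import Defs.
From HB Require Import structures.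
From mathcomp Require Import all_boot all_order all_algebra.
From mathcomp Require Import complex.
From mathcomp Require Import boolp classical_sets reals.
From mathcomp Require Import ring.
Import Order.TTheory GRing.Theory Num.Theory.
Local Open Scope ring_scope.
Local Open Scope classical_set_scope.
Local Open Scope complex_scope.
Set Implicit Arguments.
Unset Strict Implicit.
Section S.
Variable R : realType.
Local Notation C := R[i].

Lemma supP01 (E : set R) : (forall r, E r -> 0 <= r <= 1) ->
  [/\ 0 <= sup E, sup E <= 1 & forall r, E r -> r <= sup E].
Proof.
move=> H.
have ub : forall r, E r -> r <= sup E.
  move=> r Er; apply: ub_le_sup => //; exists 1 => x /H /andP[].
  by [].
have [ne|e0] := pselect (E !=set0).
  split => //.
    by case: ne => r Er; apply: le_trans (ub _ Er); case/andP: (H _ Er).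
  by apply: ge_sup => // r /H /andP[].
have -> : E = set0.
  by apply/seteqP; split => // x Ex; apply: e0; exists x.
by rewrite sup0; split => //.
Qed.

Lemma cabsE (z : C) : `|z| = (cabs z)%:C.
Proof. by rewrite /cabs normc_def. Qed.

Lemma cabs_ge0 (z : C) : 0 <= cabs z.
Proof. by rewrite -ler0c -cabsE. Qed.

Lemma cabsM (a b : C) : cabs (a * b) = cabs a * cabs b.
Proof. by apply: complexI; rewrite -cabsE normrM !cabsE rmorphM. Qed.

Lemma cabs_eq0 (z : C) : (cabs z == 0) = (z == 0).
Proof.
by rewrite -[z == 0]normr_eq0 cabsE; apply/eqP/eqP => [->|[]].
Qed.

Lemma cabs2 (z : C) : ((cabs z) ^+ 2)%:C = Num.conj z * z.
Proof. by rewrite -normCKC cabsE rmorphXn. Qed.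

Definition N2 (n : nat) (z : 'cV[C]_n) : C := (ctr z *m z) 0 0.

Lemma vnorm_ge0 n (z : 'cV[C]_n) : 0 <= vnorm z.
Proof. exact: sqrtr_ge0. Qed.

Lemma sumsq_ge0 n (z : 'cV[C]_n) : 0 <= \sum_(i < n) cabs (z i 0) ^+ 2.
Proof. by apply: sumr_ge0 => i _; rewrite sqr_ge0. Qed.

Lemma vnorm2 n (z : 'cV[C]_n) : vnorm z ^+ 2 = \sum_(i < n) cabs (z i 0) ^+ 2.
Proof. by rewrite /vnorm sqr_sqrtr // sumsq_ge0. Qed.

Lemma N2E n (z : 'cV[C]_n) : N2 z = (vnorm z ^+ 2)%:C.
Proof.
rewrite /N2 /ctr mxE vnorm2 rmorph_sum; apply: eq_bigr => i _.
by rewrite !mxE; apply/esym/cabs2.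
Qed.

Lemma vnorm_eq0 n (z : 'cV[C]_n) : (vnorm z == 0) = (z == 0).
Proof.
apply/idP/idP; last first.
  move/eqP->; rewrite /vnorm big1 ?sqrtr0 //.
  by move=> i _; rewrite mxE /cabs normr0 /= expr0n.
  
rewrite -sqrf_eq0 vnorm2 psumr_eq0 => [H|i _]; last by rewrite sqr_ge0.
apply/eqP/matrixP => i j; rewrite ord1 mxE.
by have /implyP/(_ isT) := allP H i (mem_index_enum _); rewrite sqrf_eq0 cabs_eq0 => /eqP.
Qed.

Lemma vnorm_gt0 n (z : 'cV[C]_n) : z != 0 -> 0 < vnorm z.
Proof. by move=> nz; rewrite lt_def vnorm_eq0 nz vnorm_ge0. Qed.

Lemma vnormZ n (l : C) (z : 'cV[C]_n) : vnorm (l *: z) = cabs l * vnorm z.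
Proof.
apply: (@pexpIrn _ 2) => //; rewrite ?nnegrE ?mulr_ge0 ?vnorm_ge0 ?cabs_ge0 //.
rewrite exprMn !vnorm2 mulr_sumr; apply: eq_bigr => i _.
by rewrite mxE cabsM exprMn.
Qed.


Lemma ctrM m n p (A : 'M[C]_(m, n)) (B : 'M[C]_(n, p)) : ctr (A *m B) = ctr B *m ctr A.
Proof. by rewrite /ctr map_mxM trmx_mul. Qed.

Lemma ctrD m n (A B : 'M[C]_(m, n)) : ctr (A + B) = ctr A + ctr B.
Proof. by apply/matrixP => i j; rewrite !mxE rmorphD. Qed.

Lemma ctrB m n (A B : 'M[C]_(m, n)) : ctr (A - B) = ctr A - ctr B.
Proof. by apply/matrixP => i j; rewrite !mxE rmorphB. Qed.

Lemma ctrZ m n a (A : 'M[C]_(m, n)) : ctr (a *: A) = Num.conj a *: ctr A.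
Proof. by apply/matrixP => i j; rewrite !mxE rmorphM. Qed.

Lemma ctr1 n : ctr (1%:M : 'M[C]_n) = 1%:M.
Proof. by apply/matrixP => i j; rewrite !mxE rmorph_nat eq_sym. Qed.

Lemma ctrK m n (A : 'M[C]_(m, n)) : ctr (ctr A) = A.
Proof. by apply/matrixP => i j; rewrite !mxE conjCK. Qed.

Lemma ctrV n (A : 'M[C]_n) : ctr (invmx A) = invmx (ctr A).
Proof. by rewrite /ctr map_invmx trmx_inv. Qed.

Lemma inv_uniq n (A B : 'M[C]_n) : A *m B = 1%:M -> invmx A = B.
Proof.
move=> AB; have [uA _] := mulmx1_unit AB.
by rewrite -[invmx A]mulmx1 -AB mulmxA mulVmx // mul1mx.
Qed.

Lemma entryB m n (M N : 'M[C]_(m, n)) i j : (M - N) i j = M i j - N i j.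
Proof. by rewrite !mxE. Qed.
Lemma entryD m n (M N : 'M[C]_(m, n)) i j : (M + N) i j = M i j + N i j.
Proof. by rewrite !mxE. Qed.

Lemma qformB n (A B : 'M[C]_n) x : qform (A - B) x = qform A x - qform B x.
Proof. by rewrite /qform mulmxBr mulmxBl entryB. Qed.

Lemma qformD n (A B : 'M[C]_n) x : qform (A + B) x = qform A x + qform B x.
Proof. by rewrite /qform mulmxDr mulmxDl entryD. Qed.

Lemma qform_conj n (A B : 'M[C]_n) x : qform (ctr B *m A *m B) x = qform A (B *m x).
Proof. by rewrite /qform ctrM !mulmxA. Qed.


Lemma N2_mx n (M : 'M[C]_n) x : N2 (M *m x) = qform (ctr M *m M) x.
Proof. by rewrite /N2 /qform ctrM !mulmxA. Qed.

Lemma cayley_minus n (P : 'M[C]_n) x :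
  qform (1%:M + ctr P *m P) x - qform (P + ctr P) x = N2 ((1%:M - P) *m x).
Proof.
rewrite N2_mx -qformB ctrB ctr1 mulmxBl mul1mx mulmxBr mulmx1.
by rewrite opprB opprD addrACA.
Qed.

Lemma cayley_plus n (P : 'M[C]_n) x :
  qform (1%:M + ctr P *m P) x + qform (P + ctr P) x = N2 ((1%:M + P) *m x).
Proof.
rewrite N2_mx -qformD ctrD ctr1 mulmxDl mul1mx mulmxDr mulmx1.
by rewrite [ctr P + _]addrC addrACA.
Qed.

Lemma sq_le (a b : R) : 0 <= a -> 0 <= b -> a ^+ 2 <= b ^+ 2 -> a <= b.
Proof. by move=> a0 b0; rewrite ler_sqr. Qed.

Definition psdq n (P : 'M[C]_n) := forall z, 0 <= qform (P + ctr P) z.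

Lemma cayley_le n (P : 'M[C]_n) x : psdq P ->
  vnorm ((1%:M - P) *m x) <= vnorm ((1%:M + P) *m x).
Proof.
move=> hP.
apply: sq_le; [exact: vnorm_ge0 | exact: vnorm_ge0 |].
suff H : N2 ((1%:M - P) *m x) <= N2 ((1%:M + P) *m x).
  by move: H; rewrite !N2E lecR.
rewrite -cayley_minus -cayley_plus -subr_ge0.
set a := qform _ x; set b := qform _ x.
have -> : a + b - (a - b) = b + b by ring.
exact: addr_ge0 (hP x) (hP x).
Qed.


Lemma kernel_unit n (A : 'M[C]_n) :
  (forall x : 'cV[C]_n, A *m x = 0 -> x = 0) -> A \in unitmx.
Proof.
move=> H; rewrite unitmxE unitfE -det_tr; apply/negP => /det0P [v nz vA].
have : A *m v^T = 0 by rewrite -[A]trmxK -trmx_mul vA trmx0.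
move/H => /(congr1 trmx); rewrite trmxK trmx0 => v0.
by rewrite v0 eqxx in nz.
Qed.

Lemma vnorm0 n : vnorm (0 : 'cV[C]_n) = 0.
Proof. by apply/eqP; rewrite vnorm_eq0. Qed.

Lemma psdq_unit n (P : 'M[C]_n) : psdq P -> (1%:M + P) \in unitmx.
Proof.
move=> hP; apply: kernel_unit => x Hx.
have := cayley_le x hP; rewrite Hx vnorm0 => H.
have : vnorm ((1%:M - P) *m x) == 0 by rewrite eq_le H vnorm_ge0.
rewrite vnorm_eq0 => /eqP H2.
have : (1%:M + P) *m x + (1%:M - P) *m x = 2%:R *: x.
  by rewrite -mulmxDl addrACA subrr addr0 -raddfD /= mul_scalar_mx.
rewrite Hx H2 addr0 => /esym /eqP; rewrite scaler_eq0 pnatr_eq0 /=.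
by move/eqP.
Qed.

Lemma hpd_unit n (S : 'M[C]_n) : hpd S -> S \in unitmx.
Proof.
case=> _ hS; apply: kernel_unit => x Sx; apply/eqP; apply/negP => /negP nz.
have := hS x nz; by rewrite /qform -mulmxA Sx mulmx0 mxE ltxx.
Qed.

Definition Cy n (P : 'M[C]_n) := invmx (1%:M + P) *m (1%:M - P).

Lemma Cy_mul n (P : 'M[C]_n) : psdq P -> Cy P *m (1%:M + P) = 1%:M - P.
Proof.
move=> hP; have comm : (1%:M - P) *m (1%:M + P) = (1%:M + P) *m (1%:M - P).
  rewrite mulmxBl mulmxDl !mul1mx !mulmxDr mulmxN !mulmx1.
  by rewrite opprD addrACA.
by rewrite /Cy -mulmxA comm (mulKmx (psdq_unit hP)).
Qed.

Lemma Cy_le n (P : 'M[C]_n) v : psdq P -> vnorm (Cy P *m v) <= vnorm v.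
Proof.
move=> hP; set z := invmx (1%:M + P) *m v.
have -> : v = (1%:M + P) *m z by rewrite /z (mulKVmx (psdq_unit hP)).
rewrite mulmxA (Cy_mul hP); exact: cayley_le.
Qed.

Lemma fP_prop n (P : 'M[C]_n) : psdq P ->
  [/\ 0 <= fP P, fP P <= 1 & forall v, vnorm (Cy P *m v) <= fP P * vnorm v].
Proof.
move=> hP.
have [h0 h1 hub] : [/\ 0 <= fP P, fP P <= 1 &
   forall r, [set r | exists2 x : 'cV[C]_n, x != 0 &
              r = vnorm (Cy P *m x) / vnorm x] r -> r <= fP P].
  apply: supP01 => _ [x nz ->]; rewrite divr_ge0 ?vnorm_ge0 //=.
  by rewrite ler_pdivrMr ?vnorm_gt0 // mul1r Cy_le.
split => // v; have [->|nz] := eqVneq v 0.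
  by rewrite mulmx0 vnorm0 mulr0.
by rewrite -ler_pdivrMr ?vnorm_gt0 //; apply: hub; exists v.
Qed.


Lemma tilde_psdq n (S P : 'M[C]_n) : hpd S -> psd P -> psdq (tildeP S P).
Proof.
move=> [hS _] [_ hP] z.
have cS : ctr (invmx S) = invmx S by rewrite ctrV hS.
have -> : tildeP S P + ctr (tildeP S P) =
          invmx S *m (P + ctr P) *m invmx S.
  by rewrite /tildeP !ctrM cS !mulmxA mulmxDr mulmxDl.
by rewrite -{1}cS qform_conj.
Qed.

Lemma ReB (u v : C) : complex.Re (u - v) = complex.Re u - complex.Re v.
Proof. by move: u v => [a b] [c d]. Qed.
Lemma ReD (u v : C) : complex.Re (u + v) = complex.Re u + complex.Re v.
Proof. by move: u v => [a b] [c d]. Qed.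

Lemma mfunE n (Pi Pj : 'M[C]_n) x :
  mfun Pi Pj x = fP Pj * (vnorm ((1%:M - Pi) *m x) / vnorm ((1%:M + Pi) *m x)).
Proof.
rewrite /mfun /= -ReB -ReD cayley_minus cayley_plus !N2E /=.
by rewrite -expr_div_n sqrtr_sqr ger0_norm // divr_ge0 // vnorm_ge0.
Qed.

Lemma ratio01 (a b : R) : 0 <= a -> a <= b -> 0 <= a / b <= 1.
Proof.
move=> a0 ab; have b0 : 0 <= b by apply: le_trans ab.
rewrite divr_ge0 //=; have [->|bn0] := eqVneq b 0; first by rewrite invr0 mulr0.
by rewrite ler_pdivrMr ?mul1r // lt_def bn0.
Qed.

Lemma mfun01 n (Pi Pj : 'M[C]_n) x : psdq Pi -> psdq Pj -> 0 <= mfun Pi Pj x <= 1.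
Proof.
move=> hi hj; rewrite mfunE; have [f0 f1 _] := fP_prop hj.
have /andP[r0 r1] := ratio01 (vnorm_ge0 ((1%:M - Pi) *m x)) (cayley_le x hi).
by rewrite mulr_ge0 //= mulr_ile1.
Qed.

Lemma eig_right n (g : 'M[C]_n) a : eigenvalue g a ->
  exists2 x : 'cV[C]_n, x != 0 & g *m x = a *: x.
Proof.
move=> H; have nu : (g - a%:M) \notin unitmx.
  by move: H; rewrite /eigenvalue /eigenspace kermx_eq0 row_free_unit.
case: (pselect (exists2 x : 'cV[C]_n, x != 0 & g *m x = a *: x)) => // Hn.
exfalso; move/negP: nu; apply; apply: kernel_unit => x Hx.
have [//|nz] := eqVneq x 0; exfalso; apply: Hn; exists x => //.
by move: Hx; rewrite mulmxBl mul_scalar_mx => /eqP; rewrite subr_eq0 => /eqP.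
Qed.

Lemma Cy_comm n (P : 'M[C]_n) : psdq P ->
  invmx (1%:M + P) *m (1%:M - P) = (1%:M - P) *m invmx (1%:M + P).
Proof.
move=> hP; rewrite -[in RHS](Cy_mul hP) -mulmxA (mulmxV (psdq_unit hP)) mulmx1.
by [].
Qed.


Lemma sandwich n (S P : 'M[C]_n) : S \in unitmx ->
  S *m (invmx S *m P *m invmx S) *m S = P.
Proof.
move=> uS; by rewrite !mulmxA (mulmxV uS) mul1mx -mulmxA (mulVmx uS) mulmx1.
Qed.

Lemma inv_sand n (S M : 'M[C]_n) : S \in unitmx -> M \in unitmx ->
  invmx (S *m M *m S) = invmx S *m invmx M *m invmx S.
Proof.
move=> uS uM; apply: inv_uniq.
rewrite !mulmxA -[S *m M *m S *m invmx S]mulmxA (mulmxV uS) mulmx1.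
rewrite -[S *m M *m invmx M]mulmxA (mulmxV uM) mulmx1 (mulmxV uS).
by [].
Qed.

End S.
Set Implicit Arguments.
Unset Strict Implicit.
Section S2.
Variable R : realType.
Local Notation C := R[i].

Lemma hK_lemma n (S M1 M2 N1 N2 : 'M[C]_n) (x0 : 'cV[C]_n) (l : C) : S \in unitmx ->
  invmx S *m invmx M1 *m invmx S *m (S *m N2 *m S) *m (invmx S *m invmx M2 *m invmx S)
    *m (S *m N1 *m S) *m x0 = l *: x0 ->
  invmx M1 *m (N2 *m (invmx M2 *m (N1 *m (S *m x0)))) = l *: (S *m x0).
Proof.
move=> uS.
have h1 : forall m (y : 'M[C]_(n, m)), invmx S *m (S *m y) = y by move=> m y; exact: mulKmx.
have h2 : forall m (y : 'M[C]_(n, m)), S *m (invmx S *m y) = y by move=> m y; exact: mulKVmx.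
move: (invmx S) (invmx M1) (invmx M2) h1 h2 => Si A B h1 h2.
rewrite -!mulmxA => H.
have H1 := etrans (esym (congr1 (fun z => Si *m (A *m (Si *m (S *m (N2 *m (S *m (Si *m (B *m z)))))))) (h1 _ (N1 *m (S *m x0))))) H.
have H2 := etrans (esym (congr1 (fun z => Si *m (A *m (Si *m (S *m (N2 *m z))))) (h2 _ (B *m (N1 *m (S *m x0)))))) H1.
have H3 := etrans (esym (congr1 (fun z => Si *m (A *m z)) (h1 _ (N2 *m (B *m (N1 *m (S *m x0))))))) H2.
have H4 := congr1 (mulmx S) H3.
exact: etrans (esym (h2 _ _)) (etrans H4 (esym (scalemxAr _ _ _))).
Qed.

Lemma arith (L X D D' Nm f1 f2 : R) : 0 <= L -> 0 < X -> 0 <= D -> 0 <= Nm ->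
  0 <= f1 -> 0 <= f2 -> L * X = Nm -> D <= f1 * X -> Nm <= f2 * D' -> Nm <= D' ->
  D' = D -> L <= Order.min (f2 * (D / X)) (f1 * (Nm / D')).
Proof.
move=> L0 Xp D0 N0 f10 f20 hLX c1 c2 c3 hD; subst D'.
rewrite le_min; apply/andP; split.
  by rewrite mulrA ler_pdivlMr // hLX.
have [D0E|Dp] := eqVneq D 0.
  move: c3; rewrite D0E -hLX pmulr_lle0 // => l0.
  have -> : L = 0 by apply/eqP; rewrite eq_le l0 L0.
  by rewrite invr0 !mulr0.
have Dpos : 0 < D by rewrite lt_def Dp D0.
rewrite mulrA ler_pdivlMr // -hLX mulrCA.
by rewrite ler_wpM2l.
Qed.

Lemma core n (Pt1 Pt2 : 'M[C]_n) (x : 'cV[C]_n) (l : C) :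
  psdq Pt1 -> psdq Pt2 -> x != 0 ->
  invmx (1%:M + Pt1) *m ((1%:M - Pt2) *m (invmx (1%:M + Pt2) *m
            ((1%:M - Pt1) *m x))) = l *: x ->
  ev (invmx (Pplus Pt1 Pt2) *m Pminus Pt1 Pt2) x /\
  cabs l <= Order.min (mfun Pt1 Pt2 x)
     (mfun Pt2 Pt1 (invmx (1%:M + Pt2) *m (1%:M - Pt1) *m x)).
Proof.
move=> q1 q2 nzx hK.
have uM1 := psdq_unit q1.
have uM2 := psdq_unit q2.
have [f1_0 f1_1 f1b] := fP_prop q1.
have [f2_0 f2_1 f2b] := fP_prop q2.
have nzM1x : (1%:M + Pt1) *m x != 0.
  apply/negP => /eqP h; move/negP: nzx; apply; apply/eqP.
  by rewrite -(mulKmx uM1 x) h mulmx0.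
have hinvP : invmx (Pplus Pt1 Pt2) = invmx (1%:M + Pt1) *m invmx (1%:M + Pt2).
  apply: inv_uniq; rewrite /Pplus -!mulmxA (mulKVmx uM1) (mulmxV uM2) //.
split.
  split => //; exists l.
  rewrite hinvP /Pminus -!mulmxA -hK; congr (_ *m _).
  by rewrite !mulmxA (Cy_comm q2).
set y := invmx (1%:M + Pt2) *m (1%:M - Pt1) *m x.
have ha : (1%:M + Pt2) *m y = (1%:M - Pt1) *m x.
  by rewrite /y -mulmxA (mulKVmx uM2).
have hb : (1%:M - Pt2) *m y = l *: ((1%:M + Pt1) *m x).
  rewrite scalemxAr -hK (mulKVmx uM1) /y !mulmxA.
  by [].
have Xp : 0 < vnorm ((1%:M + Pt1) *m x) by apply: vnorm_gt0.
have eC1 : (1%:M - Pt1) *m x = Cy Pt1 *m ((1%:M + Pt1) *m x).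
  by rewrite mulmxA (Cy_mul q1).
have eC2 : (1%:M - Pt2) *m y = Cy Pt2 *m ((1%:M + Pt2) *m y).
  rewrite [RHS]mulmxA; congr (_ *m _); exact: esym (Cy_mul q2).
have hlX : cabs l * vnorm ((1%:M + Pt1) *m x) = vnorm ((1%:M - Pt2) *m y).
  by rewrite hb vnormZ.
have c1 : vnorm ((1%:M - Pt1) *m x) <= fP Pt1 * vnorm ((1%:M + Pt1) *m x) :=
  eq_ind _ (fun v => vnorm v <= fP Pt1 * vnorm ((1%:M + Pt1) *m x)) (f1b ((1%:M + Pt1) *m x)) _ (esym eC1).
have c2 : vnorm ((1%:M - Pt2) *m y) <= fP Pt2 * vnorm ((1%:M + Pt2) *m y) :=
  eq_ind _ (fun v => vnorm v <= fP Pt2 * vnorm ((1%:M + Pt2) *m y)) (f2b ((1%:M + Pt2) *m y)) _ (esym eC2).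
have c3 : vnorm ((1%:M - Pt2) *m y) <= vnorm ((1%:M + Pt2) *m y) := cayley_le y q2.
have hD : vnorm ((1%:M + Pt2) *m y) = vnorm ((1%:M - Pt1) *m x) := congr1 (@vnorm R n) ha.
rewrite (mfunE Pt1 Pt2 x) (mfunE Pt2 Pt1 y).
exact: (arith (cabs_ge0 l) Xp (vnorm_ge0 _) (vnorm_ge0 _) f1_0 f2_0 hlX c1 c2 c3 hD).
Qed.

End S2.
Theorem theorem3p2 (R : realType) (n : nat) (A P1 P2 Sig S : 'M[R[i]]_n) :
  A \in unitmx -> A = P1 + P2 -> psd P1 -> psd P2 ->
  hpd Sig -> hpd S -> S *m S = Sig ->
  let Pt1 := tildeP S P1 in
  let Pt2 := tildeP S P2 in
  let Gam := Gamma_PPS Sig P1 P2 in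
  let E := ev (invmx (Pplus Pt1 Pt2) *m Pminus Pt1 Pt2) in
  let yv := fun x : 'cV[R[i]]_n => invmx (1%:M + Pt2) *m (1%:M - Pt1) *m x in
  let m1 := mfun Pt1 Pt2 in
  let m2 := mfun Pt2 Pt1 in
  (forall x : 'cV[R[i]]_n, x != 0 -> m1 x <= 1 /\ m2 x <= 1) /\
  (forall l : R[i], l \in spectrum Gam ->
     exists2 x, x \in E & cabs l <= Order.min (m1 x) (m2 (yv x))) /\
  specrad Gam <= sup [set Order.min (m1 x) (m2 (yv x)) | x in E] /\
  sup [set Order.min (m1 x) (m2 (yv x)) | x in E] <= 1.
Proof.
move=> _ _ hP1 hP2 _ hS SS Pt1 Pt2 Gam E yv m1 m2.
have uS := hpd_unit hS.
have q1 : psdq Pt1 := tilde_psdq hS hP1.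
have q2 : psdq Pt2 := tilde_psdq hS hP2.
have uM1 := psdq_unit q1.
have uM2 := psdq_unit q2.
have eP1 : Sig + P1 = S *m (1%:M + Pt1) *m S.
  by rewrite mulmxDr mulmxDl mulmx1 SS (sandwich _ uS).
have eP2 : Sig + P2 = S *m (1%:M + Pt2) *m S.
  by rewrite mulmxDr mulmxDl mulmx1 SS (sandwich _ uS).
have eN1 : Sig - P1 = S *m (1%:M - Pt1) *m S.
  by rewrite mulmxBr mulmxBl mulmx1 SS (sandwich _ uS).
have eN2 : Sig - P2 = S *m (1%:M - Pt2) *m S.
  by rewrite mulmxBr mulmxBl mulmx1 SS (sandwich _ uS).
clearbody Pt1 Pt2.
have m1_01 x : 0 <= m1 x <= 1 := mfun01 x q1 q2.
have m2_01 x : 0 <= m2 x <= 1 := mfun01 x q2 q1.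
have part1 : forall x : 'cV[R[i]]_n, x != 0 -> m1 x <= 1 /\ m2 x <= 1.
  move=> x _; have /andP[_ a] := m1_01 x; have /andP[_ b] := m2_01 x.
  exact: (conj a b).
have part2 : forall l : R[i], l \in spectrum Gam ->
     exists2 x, x \in E & cabs l <= Order.min (m1 x) (m2 (yv x)).
  move=> l; rewrite in_setE /spectrum /= => /eig_right [x0 nz0 hx0].
  move: hx0; rewrite /Gam /Gamma_PPS eP1 eP2 eN1 eN2 (inv_sand uS uM1) (inv_sand uS uM2) => hx0.
  have hK := hK_lemma uS hx0.
  have nzx : S *m x0 != 0.
    apply/eqP => h; move/eqP: nz0; apply.
    by rewrite -(mulKmx uS x0) h mulmx0.
  have [hE hle] := core q1 q2 nzx hK.
  exists (S *m x0); first by rewrite in_setE.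
  exact: hle.
have T01 : forall r, [set Order.min (m1 x) (m2 (yv x)) | x in E] r -> 0 <= r <= 1.
  move=> _ [x _ <-]; case/andP: (m1_01 x) => a0 a1; case/andP: (m2_01 (yv x)) => b0 b1.
  by rewrite le_min a0 b0 /= ge_min a1.
have [T0 T1 Tub] := supP01 T01.
split => //; split => //; split => //.
rewrite /specrad.
have [ne|e0] := pselect ([set cabs l | l in spectrum Gam] !=set0).
  apply: ge_sup => // _ [l hl <-].
  have [x xE hx] := part2 l (mem_set hl).
  apply: le_trans hx (Tub _ _); exists x => //; by rewrite -in_setE.
have -> : [set cabs l | l in spectrum Gam] = set0.
  by apply/seteqP; split => // r Er; apply: e0; exists r.
by rewrite sup0.
Qed.
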